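(* Let $J\subseteq\mathbb{M}_2$ be a bigraded ideal and $f:\Sigma^{p,q}J\to\mathbb{M}_2$ a nonzero bigraded $\mathbb{M}_2$-module homomorphism. Then exactly one of the following holds: (I) $J$ is of type I and either (i) there are $m,n\ge0$ with $\rho^m\tau^n\in J$ and $f(\rho^m\tau^n)=\rho^a\tau^b$ for some $a\ge m$, $b\ge n$; or (ii) there are $m,n\ge0$ with $\rho^m\tau^n\in J$ and $f(\rho^m\tau^n)=\frac{\theta}{\rho^a\tau^b}$ for some $a,b\ge0$; (II) $J$ is of type II and there are $m,n\ge0$ with $\frac{\theta}{\rho^m\tau^n}\in J$ and $f\big(\frac{\theta}{\rho^m\tau^n}\big)=\frac{\theta}{\rho^a\tau^b}$ for some $0\le a\le m$, $0\le b\le n$.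
   Context: $\mathbb{M}_2$ is the bigraded commutative $\mathbb{F}_2$-algebra with $\mathbb{F}_2$-basis the elements $\rho^m\tau^n$ ($m,n\ge0$) in bidegree $(m,m+n)$ and $\frac{\theta}{\rho^m\tau^n}$ ($m,n\ge 0$) in bidegree $(-m,-2-m-n)$; multiplication: $\rho^a\tau^b\cdot\rho^c\tau^d=\rho^{a+c}\tau^{b+d}$, $\rho^a\tau^b\cdot\frac{\theta}{\rho^c\tau^d}=\frac{\theta}{\rho^{c-a}\tau^{d-b}}$ if $a\le c,b\le d$ and $0$ otherwise, and the product of two elements of the form $\frac{\theta}{\rho^c\tau^d}$ is $0$. $\mathbb{M}_2^+$ is the span of the $\rho^m\tau^n$ and $\mathbb{M}_2^-$ the span of the $\frac{\theta}{\rho^m\tau^n}$. A bigraded ideal $J$ is of type I if it is generated by finitely many homogeneous elements of $\mathbb{M}_2^+$ and $J\cap\mathbb{M}_2^-=\mathbb{M}_2^-$, and of type II if $J\cap\mathbb{M}_2^+=0$ (every bigraded ideal is of one of these types). $\Sigma^{p,q}J$ is the shift with $(\Sigma^{p,q}J)^{a,b}=J^{a-p,b-q}$; module maps preserve bidegree. *)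

(* Defs.v *)
From HB Require Import structures.
From mathcomp Require Import all_boot all_order all_algebra.
Set Implicit Arguments. Unset Strict Implicit. Unset Printing Implicit Defensive.
Import Order.TTheory GRing.Theory Num.Theory.

(* Basis monomials: (true, m, n)  stands for  rho^m tau^n,                 *)
(*                  (false, m, n) stands for  theta / (rho^m tau^n).       *)
(* An element of M_2 is a finite F_2-linear combination of monomials,      *)
(* represented canonically by the list of monomials with coefficient 1,    *)
(* strictly sorted by their (injective) code [pickle].                     *)

Definition Basis := (bool * nat * nat)%type.

Definition M2 := {s : seq Basis | sorted ltn (map pickle s)}.

Definition normalize (s : seq Basis) : seq Basis :=
  sort (fun a b => pickle a <= pickle b)
       [seq b <- undup s | odd (count_mem b s)].

Lemma normalize_sorted s : sorted ltn (map pickle (normalize s)).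
Proof.
rewrite ltn_sorted_uniq_leq; apply/andP; split.
  rewrite (map_inj_uniq (@pcan_inj _ _ _ _ (@pickleK _))) sort_uniq.
  by apply: filter_uniq; apply: undup_uniq.
rewrite sorted_map; apply: sort_sorted => a b; exact: leq_total.
Qed.

Definition mk (s : seq Basis) : M2 := exist _ (normalize s) (normalize_sorted s).

Definition m0 : M2 := exist _ [::] isT.
Definition madd (x y : M2) : M2 := mk (val x ++ val y).

(* product of basis monomials (None = 0) *)
Definition mulB (a b : Basis) : option Basis :=
  match a, b with
  | (true, m, n), (true, m', n') => Some (true, m + m', n + n')
  | (true, m, n), (false, c, d) =>
      if (m <= c) && (n <= d) then Some (false, c - m, d - n) else None
  | (false, c, d), (true, m, n) =>
      if (m <= c) && (n <= d) then Some (false, c - m, d - n) else None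
  | (false, _, _), (false, _, _) => None
  end.

Definition mmul (x y : M2) : M2 :=
  mk (pmap id [seq mulB a b | a <- val x, b <- val y]).

Definition mono (b : Basis) : M2 := exist _ [:: b] isT.
Definition rt (m n : nat) : M2 := mono (true, m, n).
Definition th (m n : nat) : M2 := mono (false, m, n).

Definition deg (b : Basis) : int * int :=
  match b with
  | (true, m, n) => ((m%:Z)%R, ((m + n)%N%:Z)%R)
  | (false, m, n) => ((- m%:Z)%R, (- 2 - m%:Z - n%:Z)%R)
  end.

(* x is homogeneous of bidegree d (0 is homogeneous of every bidegree) *)
Definition homog (d : int * int) (x : M2) : bool :=
  all (fun b => deg b == d) (val x).

Definition comp (d : int * int) (x : M2) : M2 :=
  mk [seq b <- val x | deg b == d].

Definition inPlus (x : M2) : bool := all (fun b : Basis => b.1.1) (val x).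
Definition inMinus (x : M2) : bool := all (fun b : Basis => ~~ b.1.1) (val x).

(* bigraded ideal: an ideal which is the sum of its homogeneous parts *)
Definition bigraded_ideal (J : M2 -> Prop) : Prop :=
  [/\ J m0,
      (forall x y, J x -> J y -> J (madd x y)),
      (forall r x, J x -> J (mmul r x)) &
      (forall d x, J x -> J (comp d x))].

Definition gen_by (gs : seq M2) (x : M2) : Prop :=
  exists cs : seq M2, size cs = size gs /\
    x = foldr madd m0 [seq mmul c.1 c.2 | c <- zip cs gs].

Definition typeI (J : M2 -> Prop) : Prop :=
  (exists gs : seq M2,
      (forall g, g \in gs -> inPlus g /\ exists d, homog d g) /\
      (forall x, J x <-> gen_by gs x)) /\
  (forall x, inMinus x -> J x).

Definition typeII (J : M2 -> Prop) : Prop :=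
  forall x, J x -> inPlus x -> x = m0.

(* bigraded M_2-module map  Sigma^{p,q} J -> M_2, given as a function on   *)
(* M_2 whose restriction to J is the map (values off J are irrelevant). *)
Definition bigraded_hom (J : M2 -> Prop) (p q : int) (f : M2 -> M2) : Prop :=
  [/\ (forall x y, J x -> J y -> f (madd x y) = madd (f x) (f y)),
      (forall r x, J x -> f (mmul r x) = mmul r (f x)) &
      (forall s w x, J x -> homog (s, w) x -> homog ((s + p)%R, (w + q)%R) (f x))].

(* Main.v *)
Require Import Defs.
From mathcomp Require Import all_boot all_order all_algebra zify.
From Stdlib Require Import Classical.
Set Implicit Arguments. Unset Strict Implicit. Unset Printing Implicit Defensive.



Lemma valM_uniq (x : M2) : uniq (val x).
Proof.
case: x => s /= Hs.
have := sorted_uniq ltn_trans ltnn Hs.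
by rewrite (map_inj_uniq (@pcan_inj _ _ _ _ (@pickleK _))).
Qed.

Lemma M2_ext (x y : M2) : val x =i val y -> x = y.
Proof.
move=> H; apply: val_inj.
case: x y H => s Hs [t Ht] /= H.
apply: (inj_map (@pcan_inj _ _ _ _ (@pickleK _))).
apply: (irr_sorted_eq ltn_trans ltnn Hs Ht) => k.
apply/mapP/mapP => -[b Hb ->]; exists b => //; by rewrite ?H // -H.
Qed.

Lemma mem_mk s b : (b \in val (mk s)) = odd (count_mem b s).
Proof.
rewrite /mk /= /normalize mem_sort mem_filter mem_undup.
case: (boolP (b \in s)) => Hb; first by rewrite andbT.
by rewrite andbF -has_pred1 in Hb *; rewrite has_count lt0n negbK in Hb; rewrite (eqP Hb).
Qed.

Lemma cnt_mem_uniq (s : seq Basis) b : uniq s -> count_mem b s = (b \in s).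
Proof. by move=> U; rewrite count_uniq_mem. Qed.

Lemma mem_madd x y b : (b \in val (madd x y)) = (b \in val x) (+) (b \in val y).
Proof.
rewrite mem_mk count_cat !cnt_mem_uniq ?valM_uniq // oddD.
by case: (b \in val x); case: (b \in val y).
Qed.

Lemma val_mk_sorted s : sorted ltn (map pickle s) -> val (mk s) = s.
Proof.
move=> Hs; rewrite /= /normalize.
have U : uniq s by have := sorted_uniq ltn_trans ltnn Hs; rewrite (map_inj_uniq (@pcan_inj _ _ _ _ (@pickleK _))).
rewrite undup_id //.
have -> : [seq b <- s | odd (count_mem b s)] = s.
  apply/all_filterP/allP => b Hb; by rewrite cnt_mem_uniq ?Hb.
apply: sorted_sort; first by move=> a b c; apply: leq_trans.
rewrite sorted_map in Hs; rewrite -(@sorted_map _ _ pickle leq).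
rewrite sorted_map; apply: sub_sorted Hs => a b; exact: ltnW.
Qed.

Lemma mk_nil : mk [::] = m0.
Proof. by apply: val_inj; rewrite val_mk_sorted. Qed.
Lemma mk1 b : mk [:: b] = mono b.
Proof. by apply: val_inj; rewrite val_mk_sorted. Qed.

Lemma mmul_mono a b : mmul (mono a) (mono b) =
  (if mulB a b is Some c then mono c else m0).
Proof. rewrite /mmul /=; case: (mulB a b) => [c|] /=; by rewrite ?mk1 ?mk_nil. Qed.

Lemma mmul0l y : mmul m0 y = m0.
Proof. by rewrite /mmul /= mk_nil. Qed.
Lemma mmul0r y : mmul y m0 = m0.
Proof. rewrite /mmul /= (allpairs0r (fun a b => mulB a b)) mk_nil //. Qed.



Lemma deg_inj : injective deg.
Proof.
case=> [[[] m n]] [[[] m' n']] /= [] => H1 H2.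
- have E1 : m = m' by lia.
  have E2 : n = n' by lia.
  by rewrite E1 E2.
- exfalso; lia.
- exfalso; lia.
- have E1 : m = m' by lia.
  have E2 : n = n' by lia.
  by rewrite E1 E2.
Qed.

Definition pre (i j : nat) (b : Basis) : Basis :=
  match b with
  | (true, m, n) => (true, m - i, n - j)
  | (false, c, d) => (false, c + i, d + j)
  end.
Definition valid (i j : nat) (b : Basis) : bool :=
  match b with
  | (true, m, n) => (i <= m) && (j <= n)
  | (false, _, _) => true
  end.

Lemma mulB_rtE i j a b :
  (mulB a (true, i, j) == Some b) = valid i j b && (a == pre i j b).
Proof.
case: a => [[[] m n]]; case: b => [[[] c d]] /=.
- apply/eqP/andP => [[<- <-]|[/andP[H1 H2] /eqP [-> ->]]].
  + by rewrite !addnK !leq_addl.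
  + by rewrite !subnK.
- by rewrite !xpair_eqE /=; rewrite ?andbF.
- by case: ifP => _; rewrite !xpair_eqE ?andbF.
- case: ifP => H.
  + apply/eqP/eqP => [[<- <-]|[-> ->]]; last by rewrite !addnK.
    move: H => /andP [H1 H2]; by rewrite !subnK.
  + apply/esym/negbTE/eqP => -[E1 E2]; move: H; rewrite E1 E2 !leq_addl //.
Qed.

Lemma count_pmap (P : pred Basis) (L : seq (option Basis)) :
  count P (pmap id L) = count (fun o => if o is Some v then P v else false) L.
Proof. by elim: L => [|[a|] L IH] //=; rewrite IH. Qed.

Lemma mem_mmul_rt x i j b :
  (b \in val (mmul x (rt i j))) = valid i j b && (pre i j b \in val x).
Proof.
rewrite mem_mk count_pmap.
have -> : [seq mulB a b0 | a <- val x, b0 <- val (rt i j)] = [seq mulB a (true,i,j) | a <- val x].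
  by elim: (val x) => //= a s ->.
rewrite count_map.
rewrite (eq_count (a2 := fun a => valid i j b && (a == pre i j b))); last first.
  move=> a /=; rewrite -mulB_rtE; by case: (mulB a (true,i,j)) => [c|] //=; rewrite eq_sym.
case: (valid i j b); last by rewrite count_pred0.
by rewrite (eq_count (a2 := pred1 (pre i j b))) // cnt_mem_uniq ?valM_uniq //; case: (_ \in _).
Qed.

Lemma madd0l x : madd m0 x = x.
Proof. by apply: M2_ext => b; rewrite mem_madd. Qed.
Lemma madd0r x : madd x m0 = x.
Proof. by apply: M2_ext => b; rewrite mem_madd addbF. Qed.
Lemma maddxx x : madd x x = m0.
Proof. by apply: M2_ext => b; rewrite mem_madd addbb. Qed.
Lemma maddC x y : madd x y = madd y x.
Proof. by apply: M2_ext => b; rewrite !mem_madd addbC. Qed.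
Lemma maddA x y z : madd x (madd y z) = madd (madd x y) z.
Proof. by apply: M2_ext => b; rewrite !mem_madd addbA. Qed.
Lemma maddACA x y z w : madd (madd x y) (madd z w) = madd (madd x z) (madd y w).
Proof. by apply: M2_ext => b; rewrite !mem_madd addbACA. Qed.

Lemma mmul_rtDl x y i j : mmul (madd x y) (rt i j) = madd (mmul x (rt i j)) (mmul y (rt i j)).
Proof.
apply: M2_ext => b; rewrite mem_madd !mem_mmul_rt mem_madd.
by case: (valid i j b).
Qed.

Lemma sum_monos_mem (l : seq Basis) : uniq l -> val (foldr madd m0 (map mono l)) =i l.
Proof.
elim: l => [|c l IH] //; rewrite cons_uniq => /andP [Hc U] b; rewrite map_cons [foldr _ _ _]/=.
rewrite mem_madd IH // !inE.
by case: eqP => // ->; rewrite (negbTE Hc).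
Qed.

Lemma sum_monos x : x = foldr madd m0 (map mono (val x)).
Proof. by apply: M2_ext => b; rewrite sum_monos_mem ?valM_uniq. Qed.

Lemma homog_mono (d : int * int) y : homog d y -> y = m0 \/ exists c, y = mono c /\ deg c = d.
Proof.
rewrite /homog; case: y => [[|c [|c' s]]] Hs /= H.
- by left; apply: val_inj.
- right; exists c; split; first by apply: val_inj.
  by move: H => /andP [/eqP] .
- exfalso; have U := valM_uniq (exist _ [:: c, c' & s] Hs).
  move: U H => /= /andP [Hc _] /and3P [/eqP E1 /eqP E2 _].
  by move: Hc; rewrite in_cons (deg_inj (etrans E1 (esym E2))) eqxx.
Qed.

Lemma comp_mono (x : M2) (b : Basis) : b \in val x -> Defs.comp (deg b) x = mono b.
Proof.
move=> Hb; rewrite /Defs.comp.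
rewrite (eq_in_filter (a2 := pred1 b)); last first.
  move=> c _ /=; apply/eqP/eqP => [/deg_inj|->] //.
by rewrite filter_pred1_uniq ?valM_uniq // mk1.
Qed.

Lemma mono_neq0 b : mono b <> m0.
Proof. by move/(f_equal val). Qed.



Lemma least_ex (P : nat -> Prop) : (exists n, P n) -> exists n, P n /\ forall k, P k -> n <= k.
Proof.
move=> [n Pn]; apply: NNPP => H.
suff : forall N k, k < N -> ~ P k by move/(_ n.+1 n (ltnSn n)).
elim=> [//|N IH] k; rewrite ltnS leq_eqVlt => /orP [/eqP -> PN|/IH //].
apply: H; exists N; split => // k' Pk'; rewrite leqNgt; apply/negP => lt.
exact: IH lt Pk'.
Qed.

Lemma cols (S : nat -> nat -> Prop) k : exists L : seq (nat * nat),
  (forall ij, ij \in L -> S ij.1 ij.2) /\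
  (forall m n, S m n -> m < k -> exists2 ij, ij \in L & (ij.1 <= m) && (ij.2 <= n)).
Proof.
elim: k => [|k [L [HL HC]]]; first by exists [::].
case: (classic (exists n, S k n)) => [/least_ex [n0 [Sn0 Hmin]]|Hno].
- exists ((k, n0) :: L); split.
  + by move=> ij; rewrite in_cons => /orP [/eqP -> //|/HL].
  + move=> m n Smn; rewrite ltnS leq_eqVlt => /orP [/eqP Em|lt].
    * subst m; exists (k, n0); first exact: mem_head.
      by rewrite /= leqnn Hmin.
    * by have [ij Hij Hle] := HC _ _ Smn lt; exists ij => //; rewrite in_cons Hij orbT.
- exists L; split => // m n Smn; rewrite ltnS leq_eqVlt => /orP [/eqP Em|lt].
  + by exfalso; apply: Hno; exists n; rewrite -Em.
  + exact: HC.
Qed.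

Lemma dickson (S : nat -> nat -> Prop) m0 n0 : S m0 n0 -> exists L : seq (nat * nat),
  (forall ij, ij \in L -> S ij.1 ij.2) /\
  (forall m n, S m n -> exists2 ij, ij \in L & (ij.1 <= m) && (ij.2 <= n)).
Proof.
move=> S0.
have [L1 [H1 C1]] := cols S m0.
have [L2 [H2 C2]] := cols (fun a b => S b a) n0.
exists ((m0, n0) :: L1 ++ map (fun ij => (ij.2, ij.1)) L2); split.
- move=> ij; rewrite in_cons mem_cat => /orP [/eqP -> //|/orP [/H1 //|/mapP [ij' /H2 H ->] //]].
- move=> m n Smn.
  case: (ltnP m m0) => [lt|le1]; first by have [ij Hij Hle] := C1 _ _ Smn lt; exists ij => //; rewrite in_cons mem_cat Hij orbT.
  case: (ltnP n n0) => [lt|le2].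
    have [ij Hij Hle] := C2 _ _ Smn lt; exists (ij.2, ij.1); last by rewrite /= andbC.
    by rewrite in_cons mem_cat; apply/orP; right; apply/orP; right; apply/mapP; exists ij.
  by exists (m0, n0); rewrite ?mem_head //= le1 le2.
Qed.



Definition rts (L : seq (nat * nat)) := map (fun ij => rt ij.1 ij.2) L.
Definition sumz (cs : seq M2) (gs : seq M2) :=
  foldr madd m0 [seq mmul c.1 c.2 | c <- zip cs gs].

Lemma sumz_add L cs cs' : size cs = size L -> size cs' = size L ->
  madd (sumz cs (rts L)) (sumz cs' (rts L)) =
  sumz [seq madd c.1 c.2 | c <- zip cs cs'] (rts L).
Proof.
elim: L cs cs' => [|ij L IH] [|c cs] [|c' cs'] //=; first by rewrite maddxx.
move=> /succn_inj Hs /succn_inj Hs'.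
rewrite /sumz /= -/(sumz _ _) -/(sumz _ _) -/(sumz _ _) -IH //.
by rewrite mmul_rtDl maddACA.
Qed.

Lemma sumz0 L : sumz (nseq (size L) m0) (rts L) = m0.
Proof. by elim: L => //= ij L IH; rewrite /sumz /= -/(sumz _ _) IH mmul0l madd0l. Qed.

Lemma gen_add L x y : gen_by (rts L) x -> gen_by (rts L) y -> gen_by (rts L) (madd x y).
Proof.
rewrite /gen_by size_map => -[cs [Hs ->]] [cs' [Hs' ->]].
exists [seq madd c.1 c.2 | c <- zip cs cs']; split.
  by rewrite size_map size1_zip ?Hs ?Hs'.
exact: sumz_add.
Qed.

Lemma gen_one L ij c : ij \in L -> gen_by (rts L) (mmul c (rt ij.1 ij.2)).
Proof.
rewrite /gen_by size_map; elim: L => [//|ij' L IH]; rewrite in_cons => /orP [/eqP <-|H].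
- exists (c :: nseq (size L) m0); split; first by rewrite /= size_nseq.
  by have := sumz0 L; rewrite /sumz /rts /= => ->; rewrite madd0r.
- have [cs [Hs E]] := IH H; exists (m0 :: cs); split; first by rewrite /= Hs.
  by rewrite [RHS]/= mmul0l madd0l.
Qed.

Lemma gen0 L : gen_by (rts L) m0.
Proof. by exists (nseq (size L) m0); rewrite size_nseq size_map; split => //; symmetry; exact: sumz0. Qed.

Lemma typeI_of (J : M2 -> Prop) p0 q0 : bigraded_ideal J -> J (rt p0 q0) -> typeI J.
Proof.
case=> J0 Jadd Jmul Jcomp Jr.
have Jmono : forall x b, J x -> b \in val x -> J (mono b).
  by move=> x b Jx Hb; rewrite -(comp_mono Hb); apply: Jcomp.
have Jsum : forall l : seq Basis, (forall b, b \in l -> J (mono b)) -> J (foldr madd m0 (map mono l)).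
  elim=> [//|c l IH] H /=; apply: Jadd; first by apply: H; rewrite mem_head.
  by apply: IH => b Hb; apply: H; rewrite in_cons Hb orbT.
have [L [HL HC]] := @dickson (fun i j => J (rt i j)) _ _ Jr.
have [[i0 j0] H0 _] := HC _ _ Jr.
have Hth : forall c d ij, mono (false, c, d) = mmul (th (c + ij.1) (d + ij.2)) (rt ij.1 ij.2).
  by move=> c d [i j]; rewrite mmul_mono /= !leq_addl /= !addnK.
split; last first.
  move=> x Hx; rewrite (sum_monos x); apply: Jsum => b Hb.
  move: Hx => /allP /(_ b Hb); case: b Hb => [[[] c d]] Hb //= _.
  by rewrite (Hth c d (i0, j0)); apply: Jmul; exact: (HL _ H0).
exists (rts L); split.
  by move=> g /mapP [ij _ ->]; split => //; exists (deg (true, ij.1, ij.2)); rewrite /homog /= eqxx.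
move=> x; split.
- move=> Jx; rewrite (sum_monos x).
  have : forall b, b \in val x -> J (mono b) by move=> b; exact: Jmono.
  elim: (val x) => [|b l IH] H /=; first exact: gen0.
  apply: gen_add; last by apply: IH => c Hc; apply: H; rewrite in_cons Hc orbT.
  have := H b (mem_head _ _); case: b {H} => [[[] m n]] Jb.
  + have [[i j] Hij /andP [Hi Hj]] := HC _ _ Jb.
    have -> : mono (true, m, n) = mmul (rt (m - i) (n - j)) (rt (i, j).1 (i, j).2).
      by rewrite mmul_mono /= !subnK.
    exact: gen_one.
  + rewrite (Hth m n (i0, j0)); exact: gen_one.
- move=> [cs [Hs ->]]; rewrite size_map in Hs.
  elim: L cs Hs HL {HC H0} => [|ij L IH] [|c cs] //= Hs HL.
  apply: Jadd; first by apply: Jmul; apply: (HL ij); rewrite mem_head.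
  by apply: IH => [|ij' Hij']; [exact: succn_inj | apply: HL; rewrite in_cons Hij' orbT].
Qed.



Theorem lemmaA2 (J : M2 -> Prop) (p q : int) (f : M2 -> M2) :
  bigraded_ideal J -> bigraded_hom J p q f ->
  (exists x, J x /\ f x <> m0) ->
  let caseI :=
    typeI J /\
    ((exists m n a b : nat,
        [/\ J (rt m n), (m <= a)%N, (n <= b)%N & f (rt m n) = rt a b]) \/
     (exists m n a b : nat, J (rt m n) /\ f (rt m n) = th a b)) in
  let caseII :=
    typeII J /\
    (exists m n a b : nat,
        [/\ J (th m n), (a <= m)%N, (b <= n)%N & f (th m n) = th a b]) in
  (caseI /\ ~ caseII) \/ (~ caseI /\ caseII).
Proof.
move=> HJ Hf [x0 [Jx0 fx0]] caseI caseII.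
have HJ' := HJ; case: HJ' => J0 Jadd Jmul Jcomp.
case: Hf => fadd fmul fhom.
have f0 : f m0 = m0 by have := fadd m0 m0 J0 J0; rewrite !maddxx.
have Jmono : forall x b, J x -> b \in val x -> J (mono b).
  by move=> x b Jx Hb; rewrite -(comp_mono Hb); apply: Jcomp.
have fsum : forall l : seq Basis, (forall b, b \in l -> J (mono b)) ->
    (forall b, b \in l -> f (mono b) = m0) ->
    J (foldr madd m0 (map mono l)) /\ f (foldr madd m0 (map mono l)) = m0.
  elim=> [//|c l IH] H1 H2 /=.
  have [J' f'] : J (foldr madd m0 (map mono l)) /\ f (foldr madd m0 (map mono l)) = m0.
    by apply: IH => b Hb; [apply: H1 | apply: H2]; rewrite in_cons Hb orbT.
  have Jc := H1 c (mem_head _ _).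
  split; first exact: Jadd.
  by rewrite fadd // f' H2 ?mem_head // maddxx.
have [u [Ju fu]] : exists u, J (mono u) /\ f (mono u) <> m0.
  apply: NNPP => H; apply: fx0; rewrite (sum_monos x0).
  apply: (fsum _ _ _).2 => b Hb; first exact: Jmono Jx0 Hb.
  apply: NNPP => nf; apply: H; exists b; split => //; exact: Jmono Jx0 Hb.
have fmono : forall b, J (mono b) -> f (mono b) = m0 \/ exists c, f (mono b) = mono c.
  move=> b Jb.
  have Hh : homog ((deg b).1, (deg b).2) (mono b) by rewrite /homog /= -surjective_pairing eqxx.
  case: (homog_mono (fhom _ _ _ Jb Hh)) => [->|[c [-> _]]]; by [left| right; exists c].
have kill : forall r b c, J (mono b) -> f (mono b) = mono c -> mulB r b = None -> mulB r c = None.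
  move=> r b c Jb E H; have := fmul (mono r) _ Jb; rewrite E !mmul_mono H f0.
  by case: (mulB r c) => // d /esym /mono_neq0.
case: (classic (typeII J)) => HII.
- right; split.
  + case=> _ [[m [n [a [b [Jr _ _ _]]]]]|[m [n [a [b [Jr _]]]]]];
      by have := HII _ Jr isT; exact: mono_neq0.
  + split => //.
    case: u Ju fu => [[[] m n]] Ju fu.
      by exfalso; apply: (@mono_neq0 (true, m, n)); apply: HII Ju _.
    case: (fmono _ Ju) => [//|[[[tc a] b] E]].
    have K1 := kill (true, m.+1, 0) _ _ Ju E.
    have K2 := kill (true, 0, n.+1) _ _ Ju E.
    case: tc E K1 K2 => E K1 K2; first by have := K1; rewrite /= ltnn; move/(_ erefl).
    move: K1 K2 => /=; rewrite !ltnn /= => /(_ erefl) K1 /(_ erefl) K2.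
    exists m, n, a, b; split => //.
      by rewrite leqNgt; apply/negP => lt; move: K1; rewrite lt leq0n.
    by rewrite leqNgt; apply/negP => lt; move: K2; rewrite lt.
- left; split; last by case.
  have [x [Jx [Px nx]]] : exists x, J x /\ inPlus x /\ x <> m0.
    apply: NNPP => H; apply: HII => x Jx Px; apply: NNPP => nx; apply: H; exists x; tauto.
  have [b Hb] : exists b, b \in val x.
    case E: (val x) => [|b s]; last by exists b; rewrite mem_head.
    by exfalso; apply: nx; apply: val_inj; rewrite E.
  have Jb := Jmono _ _ Jx Hb.
  move: Px => /allP /(_ b Hb); case: b Hb Jb => [[[] p0 q0]] Hb Jb // _.
  split; first exact: (@typeI_of J p0 q0 HJ Jb).
  have [m [n [Jmn fmn]]] : exists m n, J (rt m n) /\ f (rt m n) <> m0.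
    case: u Ju fu => [[[] c d]] Ju fu; first by exists c, d.
    exists p0, q0; split => // E; apply: fu.
    have -> : mono (false, c, d) = mmul (th (c + p0) (d + q0)) (rt p0 q0).
      by rewrite mmul_mono /= !leq_addl /= !addnK.
    by rewrite fmul // E mmul0r.
  case: (fmono _ Jmn) => [//|[[[tc a] b] E]].
  case: tc E => E; last by right; exists m, n, a, b.
  left; exists m, n, a, b; split => //.
  + rewrite leqNgt; apply/negP => lt.
    have Hma : (m <= a) = false by rewrite leqNgt lt.
    have := kill (false, a, b + n) _ _ Jmn E; rewrite /= Hma leqnn leq_addl /=.
    rewrite leq_addr /=; by move/(_ erefl).
  + rewrite leqNgt; apply/negP => lt.
    have Hnb : (n <= b) = false by rewrite leqNgt lt.
    have := kill (false, a + m, b) _ _ Jmn E; rewrite /= Hnb andbF leq_addr leqnn /=.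
    by move/(_ erefl).
Qed.
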